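(* In the central objective estimation setting described in the context, for every $t$, \[ \mathbb{E}\|g^{0,b}_t(\theta^c_t)\|^2\le2\,\mathbb{E}\|\Delta\theta^c_t\|^2+2\sigma^2n^{-1}. \]
   Context: $n$ agents with environment distributions $\mu^i$ on $\mathcal{S}$, $\mu^0=\frac1n\sum_i\mu^i$; shared $\Phi:\mathcal{S}\to\mathbb{R}^{d\times d}$ with $\|\Phi(s)\|\le1$, $\bar\Phi^0=\mathbb{E}_{\mu^0}\Phi(s)$ with $\frac12(\bar\Phi^0+(\bar\Phi^0)^T)\succ0$; objectives $b^i(s)=\Phi(s)\theta^i_*$; $\bar b^0=\frac1n\sum_i\mathbb{E}_{\mu^i}b^i(s)$; $\theta^c_*$ solves $\bar\Phi^0\theta^c_*=\bar b^0$. Constants: $G_b=\max\{\max_i\|\theta^i_*\|,\|\theta^c_*\|\}$, $G_A\ge\sup_s\|A(s)\|$ for a shared feature map $A$, $G_x\ge0$, and $\sigma=2\max\{G_AG_x,G_b\}$ (so in particular $\sigma\ge2G_b$). Iteration: at each step each agent $i$ draws $s^i_t\sim\mu^i$ independently of everything else, $g^{0,b}_t(\theta)=\frac1n\sum_{i=1}^n(\Phi(s^i_t)\theta-b^i(s^i_t))$, $\theta^c_{t+1}=\theta^c_t-\alpha^b_tg^{0,b}_t(\theta^c_t)$ with deterministic step sizes and arbitrary $\theta^c_0$; $\Delta\theta^c_t=\theta^c_t-\theta^c_*$. *)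

(* Defs.v *)
From HB Require Import structures.
From mathcomp Require Import all_boot all_order all_algebra.
From mathcomp Require Import all_classical all_reals all_analysis.
Set Implicit Arguments. Unset Strict Implicit. Unset Printing Implicit Defensive.
Import Order.TTheory GRing.Theory Num.Theory.
Local Open Scope classical_set_scope.
Local Open Scope ring_scope.

Definition vnorm {R : realType} {d : nat} (v : 'cV[R]_d) : R :=
  Num.sqrt (\sum_(i < d) v i 0 ^+ 2).

Definition opnorm_le {R : realType} {p q : nat} (M : 'M[R]_(p, q)) (c : R) : Prop :=
  forall x : 'cV[R]_q, vnorm (M *m x) <= c * vnorm x.

Definition mexp {R : realType} {dS} {S : measurableType dS} {p q : nat}
  (mu : {measure set S -> \bar R}) (F : S -> 'M[R]_(p, q)) : 'M[R]_(p, q) :=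
  \matrix_(a, b) Rintegral mu setT (fun s => F s a b).

Definition mutually_independent {R : realType} {dT} {T : measurableType dT}
  {dS} {S : measurableType dS} {I : eqType}
  (P : probability T R) (X : I -> T -> S) : Prop :=
  forall (J : seq I) (A : I -> set S), uniq J ->
    (forall j, j \in J -> measurable (A j)) ->
    P (\big[setI/setT]_(j <- J) (X j @^-1` A j)) =
    (\prod_(j <- J) P (X j @^-1` A j))%E.

Definition has_distribution {R : realType} {dT} {T : measurableType dT}
  {dS} {S : measurableType dS} (P : probability T R) (X : T -> S)
  (mu : probability S R) : Prop :=
  forall A, measurable A -> P (X @^-1` A) = mu A.

Definition g0b {R : realType} {S : Type} {n d : nat}
  (Phi : S -> 'M[R]_d) (thstar : 'I_n -> 'cV[R]_d)
  (smp : 'I_n -> S) (theta : 'cV[R]_d) : 'cV[R]_d :=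
  n%:R^-1 *: \sum_(i < n) (Phi (smp i) *m theta - Phi (smp i) *m thstar i).

Fixpoint theta_c {R : realType} {T S : Type} {n d : nat}
  (Phi : S -> 'M[R]_d) (thstar : 'I_n -> 'cV[R]_d)
  (s : 'I_n -> nat -> T -> S) (alpha : nat -> R) (theta0 : 'cV[R]_d)
  (t : nat) (w : T) : 'cV[R]_d :=
  match t with
  | 0%N => theta0
  | t'.+1 => let th := theta_c Phi thstar s alpha theta0 t' w in
             th - alpha t' *: g0b Phi thstar (fun i => s i t' w) th
  end.

(* Main.v *)
Require Import Defs.
From HB Require Import structures.
From mathcomp Require Import all_boot all_order all_algebra.
From mathcomp Require Import all_classical all_reals all_analysis.
From mathcomp Require Import measurable_realfun ring lra.
Import Order.TTheory GRing.Theory Num.Theory.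
Local Open Scope classical_set_scope.
Local Open Scope ring_scope.

Lemma bnd_of (R : realType) (U : Type) (A : set U) (f : U -> R) (M : R) :
  (forall x, `|f x| <= M) -> [bounded f x | x in A].
Proof.
move=> bf; rewrite /bounded_near; near=> K => x _ /=.
apply: le_trans (bf x) _; near: K; apply: nbhs_pinfty_ge; exact: num_real.
Unshelve. all: by end_near.
Qed.

Lemma bnd_int (R : realType) d (T : measurableType d) (P : probability T R)
  (f : T -> R) (M : R) : measurable_fun setT f -> (forall x, `|f x| <= M) ->
  P.-integrable setT (EFin \o f).
Proof.
move=> mf bf; apply: measurable_bounded_integrable => //; last exact: bnd_of bf.
  by have h1 := probability_setT P; apply: (@le_lt_trans _ _ 1%E) => //; [rewrite -h1|rewrite ltry].
Qed.

Lemma distr_int (R : realType) dT (T : measurableType dT) (P : probability T R)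
  dS (S : measurableType dS) (X : T -> S) (mu : probability S R)
  (mX : measurable_fun setT X)
  (hX : forall A, measurable A -> P (X @^-1` A) = mu A)
  (f : S -> R) (M : R) : measurable_fun setT f -> (forall x, `|f x| <= M) ->
  (\int[P]_w (f (X w))%:E = \int[mu]_x (f x)%:E)%E.
Proof.
move=> mf bf.
rewrite [RHS](eq_measure_integral (pushforward P X)); last first.
  by move=> A mA _; exact: (esym (hX A mA)).
rewrite integral_pushforward //.
- exact/measurable_realfun.measurable_EFinP.
- rewrite preimage_setT; apply: (@bnd_int _ _ _ P _ M) => //=.
  exact: measurableT_comp.
Qed.

Lemma indep_int (R : realType) dT (T : measurableType dT) (P : probability T R)
  dS (S : measurableType dS) (X Y : T -> S) (mu1 mu2 : probability S R)
  (mX : measurable_fun setT X) (mY : measurable_fun setT Y)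
  (hX : forall A, measurable A -> P (X @^-1` A) = mu1 A)
  (hY : forall A, measurable A -> P (Y @^-1` A) = mu2 A)
  (hXY : forall A B, measurable A -> measurable B ->
     P (X @^-1` A `&` Y @^-1` B) = (P (X @^-1` A) * P (Y @^-1` B))%E)
  (f h : S -> R) (Mf Mh : R) : measurable_fun setT f -> measurable_fun setT h ->
  (forall x, `|f x| <= Mf) -> (forall x, `|h x| <= Mh) ->
  (\int[P]_w (f (X w) * h (Y w))%:E =
   \int[mu1]_x (f x)%:E * \int[mu2]_y (h y)%:E)%E.
Proof.
move=> mf mh bf bh.
pose Z := fun w => (X w, Y w).
have mZ : measurable_fun setT Z by exact: measurable_fun_pair.
pose F := fun z : S * S => f z.1 * h z.2.
have mF : measurable_fun setT F.
  apply: measurable_funM.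
    exact: (measurableT_comp mf measurable_fst).
  exact: (measurableT_comp mh measurable_snd).
have bF : forall z, `|F z| <= Mf * Mh.
  move=> z; rewrite /F normrM; apply: ler_pM => //.
have -> : (\int[P]_w (f (X w) * h (Y w))%:E = \int[P]_w (F (Z w))%:E)%E by [].
rewrite (@distr_int _ _ _ P _ _ Z ((mu1 \x mu2)%E) mZ _ F (Mf * Mh)) //; last first.
  move=> A mA; symmetry.
  apply: (@product_measure_unique _ _ _ _ _ mu1 mu2 (pushforward P Z)) => //.
  move=> B C mB mC.
  have := hXY B C mB mC; rewrite (hX B mB) (hY C mC) => <-.
  by [].
rewrite -integral12_prod_meas1 /=; last first.
  exact: (@bnd_int _ _ _ ((mu1 \x mu2)%E) _ (Mf * Mh)).
rewrite /fubini_F /=.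
have ih := @bnd_int _ _ _ mu2 _ Mh mh bh.
have -> : (fun x => (\int[mu2]_y (F (x, y))%:E)%E) =
          (fun x => (f x)%:E * \int[mu2]_y (h y)%:E)%E.
  apply/funext => x; rewrite /F -integralZl //.
have ifin : (\int[mu2]_y (h y)%:E)%E \is a fin_num.
  exact: integrable_fin_num ih.
rewrite -(fineK ifin) integralZr //.
exact: (@bnd_int _ _ _ mu1 _ Mf).
Qed.
Definition SS {R : realType} {d : nat} (v : 'cV[R]_d) : R :=
  \sum_(k < d) v k 0 ^+ 2.

Lemma SS_ge0 (R : realType) d (v : 'cV[R]_d) : 0 <= SS v.
Proof. by apply: sumr_ge0 => k _; exact: sqr_ge0. Qed.

Lemma vnorm2 (R : realType) d (v : 'cV[R]_d) : vnorm v ^+ 2 = SS v.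
Proof. by rewrite /vnorm sqr_sqrtr // SS_ge0. Qed.

Lemma vnorm_ge0 (R : realType) d (v : 'cV[R]_d) : 0 <= vnorm v.
Proof. exact: sqrtr_ge0. Qed.

Lemma SS_op (R : realType) d (M : 'M[R]_d) (v : 'cV[R]_d) :
  opnorm_le M 1 -> SS (M *m v) <= SS v.
Proof.
move=> h; have := h v; rewrite mul1r => hv.
rewrite -!vnorm2; apply: lerXn2r; rewrite ?nnegrE ?vnorm_ge0 //.
Qed.

Lemma SS_add2 (R : realType) d (u v : 'cV[R]_d) :
  SS (u + v) <= 2 * SS u + 2 * SS v.
Proof.
rewrite /SS !mulr_sumr -big_split; apply: ler_sum => k _; rewrite !mxE /=.
rewrite -subr_ge0.
have -> : 2 * u k 0 ^+ 2 + 2 * v k 0 ^+ 2 - (u k 0 + v k 0) ^+ 2 =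
  (u k 0 - v k 0) ^+ 2 by ring.
exact: sqr_ge0.
Qed.

Lemma SS_sub2 (R : realType) d (u v : 'cV[R]_d) :
  SS (u - v) <= 2 * SS u + 2 * SS v.
Proof.
have -> : SS v = SS (- v) by rewrite /SS; apply: eq_bigr => k _; rewrite mxE sqrrN.
exact: SS_add2.
Qed.

Lemma CS_sum (R : realType) n (x : 'I_n -> R) :
  (\sum_i x i) ^+ 2 <= n%:R * \sum_i x i ^+ 2.
Proof.
have h : 0 <= \sum_i \sum_j (x i - x j) ^+ 2.
  by apply: sumr_ge0 => i _; apply: sumr_ge0 => j _; exact: sqr_ge0.
have e : \sum_i \sum_j (x i - x j) ^+ 2 =
   2 * (n%:R * \sum_i x i ^+ 2) - 2 * (\sum_i x i) ^+ 2.
  have -> : \sum_i \sum_j (x i - x j) ^+ 2 = \sum_i \sum_(j < n) x i ^+ 2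
      + \sum_(i < n) \sum_j x j ^+ 2 - 2 * \sum_i \sum_j (x i * x j).
    rewrite mulr_sumr -big_split -sumrB /=; apply: eq_bigr => i _.
    rewrite mulr_sumr -big_split -sumrB /=; apply: eq_bigr => j _; ring.
  have -> : \sum_(i < n) \sum_(j < n) x i * x j = (\sum_i x i) ^+ 2.
    by rewrite expr2 mulr_suml; apply: eq_bigr => i _; rewrite mulr_sumr.
  have -> : \sum_(i < n) \sum_(j < n) x i ^+ 2 = n%:R * \sum_i x i ^+ 2.
    rewrite mulr_sumr; apply: eq_bigr => i _.
    by rewrite sumr_const card_ord mulr_natl.
  rewrite sumr_const card_ord -mulr_natl; ring.
lra.
Qed.

Lemma SS_avg (R : realType) d n (y : 'I_n -> 'cV[R]_d) : (0 < n)%N ->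
  SS (n%:R^-1 *: \sum_i y i) <= n%:R^-1 * \sum_i SS (y i).
Proof.
move=> n0.
have nR : 0 < n%:R :> R by rewrite ltr0n.
rewrite /SS exchange_big /= mulr_sumr; apply: ler_sum => k _.
rewrite mxE summxE exprMn.
apply: (@le_trans _ _ (n%:R^-1 ^+ 2 * (n%:R * \sum_i y i k 0 ^+ 2))).
  by apply: ler_wpM2l; [exact: sqr_ge0|exact: (@CS_sum _ _ (fun i => y i k 0))].
rewrite mulrA expr2 -(mulrA _ _ n%:R) mulVf ?mulr1 //; exact: lt0r_neq0.
Qed.

Definition mmx {dT} {T : measurableType dT} {R : realType} {p q : nat}
  (M : T -> 'M[R]_(p, q)) := forall a b, measurable_fun setT (fun w => M w a b).

Section mmx.
Context {dT} {T : measurableType dT} {R : realType}.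

Lemma mmx_cst p q (M0 : 'M[R]_(p, q)) : mmx (fun _ : T => M0).
Proof. by move=> a b; exact: measurable_cst. Qed.

Lemma mmx_add p q (M N : T -> 'M[R]_(p, q)) : mmx M -> mmx N -> mmx (fun w => M w + N w).
Proof.
move=> hM hN a b; under eq_fun do rewrite mxE.
exact: measurable_funD.
Qed.

Lemma mmx_opp p q (M : T -> 'M[R]_(p, q)) : mmx M -> mmx (fun w => - M w).
Proof.
move=> hM a b; under eq_fun do rewrite mxE.
exact: measurableT_comp.
Qed.

Lemma mmx_sub p q (M N : T -> 'M[R]_(p, q)) : mmx M -> mmx N -> mmx (fun w => M w - N w).
Proof. by move=> hM hN; apply: mmx_add => //; exact: mmx_opp. Qed.

Lemma mmx_scale p q (c : R) (M : T -> 'M[R]_(p, q)) : mmx M -> mmx (fun w => c *: M w).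
Proof.
move=> hM a b; under eq_fun do rewrite mxE.
exact: measurable_funM.
Qed.

Lemma mmx_mul p q r (M : T -> 'M[R]_(p, q)) (N : T -> 'M[R]_(q, r)) :
  mmx M -> mmx N -> mmx (fun w => M w *m N w).
Proof.
move=> hM hN a b; under eq_fun do rewrite mxE.
apply: measurable_sum => j; exact: measurable_funM.
Qed.

Lemma mmx_sum n p q (M : 'I_n -> T -> 'M[R]_(p, q)) :
  (forall i, mmx (M i)) -> mmx (fun w => \sum_i M i w).
Proof.
move=> hM a b; under eq_fun do rewrite summxE.
by apply: measurable_sum => j; exact: hM.
Qed.

End mmx.

Lemma mmx_theta (R : realType) dT (T : measurableType dT) dS (S : measurableType dS)
  n d (Phi : S -> 'M[R]_d) (thstar : 'I_n -> 'cV[R]_d)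
  (s : 'I_n -> nat -> T -> S) (alpha : nat -> R) (theta0 : 'cV[R]_d) :
  (forall a b, measurable_fun setT (fun x => Phi x a b)) ->
  (forall i k, measurable_fun setT (s i k)) ->
  forall t, mmx (theta_c Phi thstar s alpha theta0 t).
Proof.
move=> hPhi hs.
have hPs : forall i k, mmx (fun w => Phi (s i k w)).
  by move=> i k a b; exact: (measurableT_comp (hPhi a b) (hs i k)).
elim=> [|t IH] /=; first exact: mmx_cst.
apply: mmx_sub => //; apply: mmx_scale; rewrite /g0b.
apply: mmx_scale; apply: mmx_sum => i; apply: mmx_sub; apply: mmx_mul => //.
Qed.

Lemma real_ite_bound (R : realType) n d (Q C : 'I_n -> 'I_d -> R) (K : R) :
  (forall k, \sum_i C i k = 0) -> (forall i, \sum_k Q i k <= K) ->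
  \sum_k \sum_i \sum_j (if i == j then Q i k else C i k * C j k) <= n%:R * K.
Proof.
move=> hc hQ.
have e : forall k i, \sum_j (if i == j then Q i k else C i k * C j k) =
    Q i k - C i k ^+ 2.
  move=> k i.
  have h1 : \sum_j (if i == j then Q i k else C i k * C j k) =
      \sum_j (C i k * C j k + (if i == j then Q i k - C i k ^+ 2 else 0)).
    by apply: eq_bigr => j _; case: eqP => [<-|_]; rewrite ?addr0 //; ring.
  rewrite h1 big_split /= -mulr_sumr hc mulr0 add0r.
  rewrite (bigD1 i) //= eqxx big1 ?addr0 // => j /negbTE; rewrite eq_sym => ->.
  done.
under eq_bigr do under eq_bigr do rewrite e.
apply: (@le_trans _ _ (\sum_k \sum_i Q i k)).
  apply: ler_sum => k _; apply: ler_sum => i _.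
  by rewrite lerBlDr lerDl sqr_ge0.
rewrite exchange_big /=.
apply: le_trans (ler_sum _ (fun i _ => hQ i)) _.
by rewrite sumr_const card_ord mulr_natl.
Qed.

Lemma b_bound (R : realType) dT (T : measurableType dT) (P : probability T R)
  dS (S : measurableType dS) n (mu : 'I_n -> probability S R) (X : 'I_n -> T -> S)
  (mX : forall i, measurable_fun setT (X i))
  (hX : forall i A, measurable A -> P (X i @^-1` A) = mu i A)
  (hXY : forall i j, i != j -> forall A B, measurable A -> measurable B ->
     P (X i @^-1` A `&` X j @^-1` B) = (P (X i @^-1` A) * P (X j @^-1` B))%E)
  d (f : 'I_n -> 'I_d -> S -> R) (M K : R)
  (mf : forall i k, measurable_fun setT (f i k))
  (hM : forall i k x, `|f i k x| <= M)
  (hK : forall i x, \sum_k f i k x ^+ 2 <= K)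
  (c : 'I_n -> 'I_d -> R)
  (hcint : forall i k, (\int[mu i]_x (f i k x)%:E = (c i k)%:E)%E)
  (hc : forall k, \sum_i c i k = 0) :
  (\int[P]_w (\sum_k \sum_i \sum_j f i k (X i w) * f j k (X j w))%:E
     <= (n%:R * K)%:E)%E.
Proof.
have mfX : forall i k, measurable_fun setT (fun w => f i k (X i w)).
  by move=> i k; exact: measurableT_comp (mf i k) (mX i).
have iP : forall k i j, P.-integrable setT (fun w => (f i k (X i w) * f j k (X j w))%:E).
  move=> k i j; apply: (@bnd_int _ _ _ P _ (M * M)).
    exact: measurable_funM.
  by move=> w; rewrite normrM; apply: ler_pM.
pose Q i k := fine (\int[mu i]_x (f i k x ^+ 2)%:E).
have iQ : forall i k, (mu i).-integrable setT (fun x => (f i k x ^+ 2)%:E).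
  move=> i k; apply: (@bnd_int _ _ _ (mu i) _ (M * M)).
    exact: measurable_funX.
  by move=> x; rewrite normrX expr2; apply: ler_pM.
have eQ : forall i k, (\int[mu i]_x (f i k x ^+ 2)%:E)%E = (Q i k)%:E.
  by move=> i k; rewrite /Q fineK //; exact: integrable_fin_num (iQ i k).
have eT : forall k i j, (\int[P]_w (f i k (X i w) * f j k (X j w))%:E)%E =
    (if i == j then Q i k else c i k * c j k)%:E.
  move=> k i j; have [<-|ij] := eqVneq i j.
    rewrite -eQ; under eq_integral do rewrite -expr2.
    apply: (@distr_int _ _ _ P _ _ (X i) (mu i) (mX i) (hX i) (fun x => f i k x ^+ 2) (M * M)).
      exact: measurable_funX.
    by move=> x; rewrite normrX expr2; apply: ler_pM.
  rewrite EFinM -hcint -hcint.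
  apply: (@indep_int _ _ _ P _ _ (X i) (X j) (mu i) (mu j) (mX i) (mX j) (hX i) (hX j) (hXY i j ij) _ _ M M) => //.
have -> : (\int[P]_w (\sum_k \sum_i \sum_j f i k (X i w) * f j k (X j w))%:E =
   \int[P]_w (\sum_k \sum_i \sum_j (f i k (X i w) * f j k (X j w))%:E))%E.
  apply: eq_integral => w _; rewrite -sumEFin; apply: eq_bigr => k _.
  rewrite -sumEFin; apply: eq_bigr => i _; by rewrite -sumEFin.
rewrite integral_sum //; last first.
  move=> k; apply: integrable_sum => // i _; apply: integrable_sum => // j _; exact: iP.
under eq_bigr => k _.
  rewrite integral_sum //; last first.
    by move=> i; apply: integrable_sum => // j _; exact: iP.
  under eq_bigr => i _.
    rewrite integral_sum //.
    under eq_bigr => j _ do rewrite eT.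
    rewrite sumEFin.
    over.
  rewrite sumEFin.
  over.
rewrite sumEFin lee_fin.
apply: real_ite_bound.
  move=> k; exact: hc.
move=> i.
rewrite -lee_fin -sumEFin.
under eq_bigr => k _ do rewrite -eQ.
rewrite -integral_sum //.
apply: (@le_trans _ _ (\int[mu i]_x (cst K%:E x))%E).
  apply: le_integral => //.
  - by apply: integrable_sum => // k _; exact: iQ.
  - exact: (@bnd_int _ _ _ (mu i) (fun _ => K) `|K| (measurable_cst _) (fun _ => lexx _)).
  - by move=> x _; rewrite sumEFin lee_fin /=; exact: hK.
  by rewrite integral_cst //; have h1 := probability_setT (mu i); rewrite /= in h1 *; rewrite h1 mule1.
by move=> k; exact: iQ.
Qed.

Lemma entry_le_SS (R : realType) d (v : 'cV[R]_d) k : v k 0 ^+ 2 <= SS v.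
Proof.
rewrite /SS (bigD1 k) //= lerDl; apply: sumr_ge0 => j _; exact: sqr_ge0.
Qed.

Lemma abs_le_of_sqr (R : realType) (x M : R) : 0 <= M -> x ^+ 2 <= M ^+ 2 -> `|x| <= M.
Proof.
move=> M0 h; rewrite -(ler_pXn2r (n:=2)) ?nnegrE ?normr_ge0 //.
by rewrite real_normK // num_real.
Qed.

Lemma opnorm_entry (R : realType) d (M : 'M[R]_d) a b :
  opnorm_le M 1 -> `|M a b| <= 1.
Proof.
move=> h; apply: abs_le_of_sqr => //.
have e : (M *m delta_mx b (0:'I_1)) a 0 = M a b.
  rewrite mxE (bigD1 b) //= mxE !eqxx mulr1 big1 ?addr0 // => j /negbTE jb.
  rewrite mxE; case: eqP => [bj|_]; last by rewrite /= mulr0.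
  by rewrite bj eqxx in jb.
rewrite -e; apply: le_trans (@entry_le_SS _ _ _ a) _.
apply: le_trans (@SS_op _ _ _ _ h) _.
rewrite /SS (bigD1 b) //= mxE !eqxx big1 ?addr0 ?expr1n // => j /negbTE jb.
rewrite mxE; case: eqP => [bj|_]; last by rewrite /= expr0n.
by rewrite bj eqxx in jb.
Qed.

Lemma mmx_SS dT (T : measurableType dT) (R : realType) d (v : T -> 'cV[R]_d) :
  mmx v -> measurable_fun setT (fun w => SS (v w)).
Proof.
move=> hv; rewrite /SS; apply: measurable_sum => k; exact: measurable_funX.
Qed.

Lemma g0b_split (R : realType) (S : Type) n d (Phi : S -> 'M[R]_d)
  (thstar : 'I_n -> 'cV[R]_d) (smp : 'I_n -> S) (th thc : 'cV[R]_d) :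
  g0b Phi thstar smp th = n%:R^-1 *: \sum_i (Phi (smp i) *m (th - thc))
     + n%:R^-1 *: \sum_i (Phi (smp i) *m (thc - thstar i)).
Proof.
rewrite /g0b -scalerDr -big_split /=; congr (_ *: _); apply: eq_bigr => i _.
by rewrite !mulmxBr addrA subrK.
Qed.

Lemma pw_bound (R : realType) (S : Type) n d (Phi : S -> 'M[R]_d)
  (thstar : 'I_n -> 'cV[R]_d) (smp : 'I_n -> S) (th thc : 'cV[R]_d) :
  (0 < n)%N -> (forall x, opnorm_le (Phi x) 1) ->
  SS (g0b Phi thstar smp th) <= 2 * SS (th - thc)
     + 2 * SS (n%:R^-1 *: \sum_i (Phi (smp i) *m (thc - thstar i))).
Proof.
move=> n0 hop; rewrite (@g0b_split _ _ _ _ _ _ _ _ thc).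
apply: le_trans (@SS_add2 _ _ _ _) _; apply: lerD => //.
apply: ler_wpM2l => //; apply: le_trans (@SS_avg _ _ _ _ n0) _.

have nR : 0 < n%:R :> R by rewrite ltr0n.
apply: (@le_trans _ _ (n%:R^-1 * \sum_(i < n) SS (th - thc))).
  apply: ler_wpM2l; first by rewrite invr_ge0 ltW.
  by apply: ler_sum => i _; exact: SS_op.
rewrite sumr_const card_ord -[SS _ *+ n]mulr_natl mulrA mulVf ?mul1r //.
exact: lt0r_neq0.
Qed.

Lemma SS_bexp (R : realType) n d (c : R) (y : 'I_n -> 'cV[R]_d) :
  SS (c *: \sum_i y i) = c ^+ 2 * \sum_k \sum_i \sum_j (y i k 0 * y j k 0).
Proof.
rewrite /SS mulr_sumr; apply: eq_bigr => k _.
rewrite mxE summxE exprMn; congr (_ * _).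
by rewrite expr2 mulr_suml; apply: eq_bigr => i _; rewrite mulr_sumr.
Qed.

Theorem lemma7 (R : realType) (dT : measure_display) (T : measurableType dT)
  (P : probability T R) (dS : measure_display) (S : measurableType dS)
  (n d : nat) (mu : 'I_n -> probability S R)
  (Phi : S -> 'M[R]_d) (thstar : 'I_n -> 'cV[R]_d) (thc : 'cV[R]_d)
  (p q : nat) (A : S -> 'M[R]_(p, q)) (GA Gx Gb sigma : R)
  (s : 'I_n -> nat -> T -> S) (alpha : nat -> R) (theta0 : 'cV[R]_d) (t : nat) :
  (0 < n)%N ->
  (forall a b, measurable_fun setT (fun x => Phi x a b)) ->
  (forall x, opnorm_le (Phi x) 1) ->
  (let Phibar0 := n%:R^-1 *: \sum_(i < n) mexp (mu i) Phi in
   (forall x : 'cV[R]_d, x != 0 ->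
      0 < ((x^T *m ((2%:R^-1) *: (Phibar0 + Phibar0^T))) *m x) 0 0) /\
   let bbar0 := n%:R^-1 *: \sum_(i < n) (mexp (mu i) Phi *m thstar i) in
   Phibar0 *m thc = bbar0) ->
  Gb = Num.max (\big[Num.max/0]_(i < n) vnorm (thstar i)) (vnorm thc) ->
  (forall x, opnorm_le (A x) GA) ->
  0 <= Gx ->
  sigma = 2 * Num.max (GA * Gx) Gb ->
  (forall i k, measurable_fun setT (s i k)) ->
  (forall i k, has_distribution P (s i k) (mu i)) ->
  mutually_independent P (fun ik : 'I_n * nat => s ik.1 ik.2) ->
  let theta := theta_c Phi thstar s alpha theta0 t in
  (\int[P]_w ((vnorm (g0b Phi thstar (fun i => s i t w) (theta w))) ^+ 2)%:E <=
   2%:E * \int[P]_w ((vnorm (theta w - thc)) ^+ 2)%:E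
   + (2 * sigma ^+ 2 / n%:R)%:E)%E.
Proof.
move=> n0 hPhi hop hPB hGb hA hGx hsig hs hdist hind.
cbv zeta.
set theta := theta_c Phi thstar s alpha theta0 t.
move: hPB; cbv zeta => -[_ hthc].
have nR : 0 < n%:R :> R by rewrite ltr0n.
have Gb0 : 0 <= Gb by rewrite hGb le_max vnorm_ge0 orbT.
have hGc : vnorm thc <= Gb by rewrite hGb le_max lexx orbT.
have hGi : forall i, vnorm (thstar i) <= Gb.
  move=> i; rewrite hGb le_max; apply/orP; left.
  exact: (le_bigmax _ (fun i => vnorm (thstar i)) i).
have sGb : 4 * Gb ^+ 2 <= sigma ^+ 2.
  have h : 2 * Gb <= sigma by rewrite hsig ler_pM2l // le_max lexx orbT.
  have -> : 4 * Gb ^+ 2 = (2 * Gb) ^+ 2 by ring.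
  apply: lerXn2r => //; rewrite nnegrE //; lra.
pose v i := thc - thstar i.
have hv : forall i, SS (v i) <= 4 * Gb ^+ 2.
  move=> i; apply: le_trans (@SS_sub2 _ _ _ _) _.
  have h1 : SS thc <= Gb ^+ 2.
    by rewrite -vnorm2; apply: lerXn2r; rewrite ?nnegrE ?vnorm_ge0.
  have h2 : SS (thstar i) <= Gb ^+ 2.
    by rewrite -vnorm2; apply: lerXn2r; rewrite ?nnegrE ?vnorm_ge0.
  lra.
pose X i := s i t.
pose f i k x := (Phi x *m v i) k 0.
pose c i k := (mexp (mu i) Phi *m v i) k 0.
pose bv w := n%:R^-1 *: \sum_i (Phi (X i w) *m v i).
have mf : forall i k, measurable_fun setT (f i k).
  move=> i k; rewrite /f; under eq_fun do rewrite mxE.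
  apply: measurable_sum => l; apply: measurable_funM => //; exact: measurable_cst.
have hK : forall i x, \sum_k f i k x ^+ 2 <= 4 * Gb ^+ 2.
  move=> i x; exact: le_trans (@SS_op _ _ _ _ (hop x)) (hv i).
have hM : forall i k x, `|f i k x| <= 2 * Gb.
  move=> i k x; apply: abs_le_of_sqr; first by lra.
  apply: le_trans (@entry_le_SS _ _ _ k) _.
  apply: le_trans (@SS_op _ _ _ _ (hop x)) _.
  apply: le_trans (hv i) _; rewrite exprMn; lra.
have hX : forall i B, measurable B -> P (X i @^-1` B) = mu i B.
  by move=> i B mB; exact: hdist.
have hXY : forall i j, i != j -> forall B C, measurable B -> measurable C ->
     P (X i @^-1` B `&` X j @^-1` C) = (P (X i @^-1` B) * P (X j @^-1` C))%E.
  move=> i j ij B C mB mC.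
  have ji : j != i by rewrite eq_sym.
  have := hind [:: (i, t); (j, t)] (fun ik => if ik.1 == i then B else C).
  rewrite !big_cons !big_nil /= eqxx (negbTE ji) setIT mule1 => h.
  apply: h.
    by rewrite /= inE andbT xpair_eqE negb_and ij.
  by move=> k; rewrite !inE => /orP[] /eqP -> /=; rewrite ?eqxx ?(negbTE ji).
have iPhi : forall i k l, (mu i).-integrable setT (fun x => (Phi x k l)%:E).
  move=> i k l; apply: (@bnd_int _ _ _ (mu i) (fun x => Phi x k l) 1) => //.
  by move=> x; exact: opnorm_entry.
have hcint : forall i k, (\int[mu i]_x (f i k x)%:E = (c i k)%:E)%E.
  move=> i k; rewrite /f /c.
  under eq_integral do rewrite mxE -sumEFin.
  rewrite integral_sum //; last first.
    move=> l; apply: (@bnd_int _ _ _ (mu i) (fun x => Phi x k l * v i l 0) `|v i l 0|).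
      by apply: measurable_funM => //; exact: measurable_cst.
    move=> x; rewrite normrM; rewrite -[X in _ <= X]mul1r.
    by apply: ler_wpM2r => //; exact: opnorm_entry.
  rewrite mxE -sumEFin; apply: eq_bigr => l _.
  rewrite mxE EFinM.
  under eq_integral do rewrite EFinM.
  rewrite integralZr //; last exact: iPhi.
  have -> : (\int[mu i]_x (Phi x k l)%:E)%E = (mexp (mu i) Phi k l)%:E.
    by rewrite /mexp mxE /Rintegral fineK //; exact: integrable_fin_num (iPhi i k l).
  by [].
have hc : forall k, \sum_i c i k = 0.
  have e : (\sum_i mexp (mu i) Phi) *m thc = \sum_i (mexp (mu i) Phi *m thstar i).
    apply: (@scalerI _ _ (n%:R^-1)); first by rewrite invr_neq0 // lt0r_neq0.
    rewrite -hthc; exact: scalemxAl.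
  have e2 : \sum_i (mexp (mu i) Phi *m v i) = 0.
    rewrite /v; under eq_bigr do rewrite mulmxBr.
    by rewrite sumrB -mulmx_suml e subrr.
  by move=> k; rewrite /c -summxE e2 mxE.
have hb0 := @b_bound R dT T P dS S n mu X (fun i => hs i t) hX hXY d f (2 * Gb) (4 * Gb ^+ 2) mf hM hK c hcint hc.
pose G w := \sum_k \sum_i \sum_j f i k (X i w) * f j k (X j w).
have mth := @mmx_theta R dT T dS S n d Phi thstar s alpha theta0 hPhi hs t.
have mPX : forall i, mmx (fun w => Phi (X i w)).
  by move=> i a b; exact: (measurableT_comp (hPhi a b) (hs i t)).
have mg : mmx (fun w => g0b Phi thstar (fun i => s i t w) (theta w)).
  rewrite /g0b; apply: mmx_scale; apply: mmx_sum => i.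
  by apply: mmx_sub; apply: mmx_mul; [exact: mPX|exact: mth|exact: mPX|exact: mmx_cst].
have mD : mmx (fun w => theta w - thc) by apply: mmx_sub => //; exact: mmx_cst.
have mbv : mmx bv.
  by rewrite /bv; apply: mmx_scale; apply: mmx_sum => i; apply: mmx_mul; [exact: mPX|exact: mmx_cst].
have eG : forall w, SS (bv w) = n%:R^-1 ^+ 2 * G w by move=> w; exact: SS_bexp.
have G0 : forall w, 0 <= G w.
  move=> w; have e := @SS_bexp R n d 1 (fun i => Phi (X i w) *m v i).
  rewrite expr1n mul1r in e.
  have -> : G w = SS (1 *: \sum_i (Phi (X i w) *m v i)) by rewrite e.
  exact: SS_ge0.
have mG : measurable_fun setT G.
  apply: measurable_sum => k; apply: measurable_sum => i; apply: measurable_sum => j.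
  apply: measurable_funM; exact: measurableT_comp (mf _ k) (hs _ t).
have hb : (\int[P]_w (SS (bv w))%:E <= (4 * Gb ^+ 2 / n%:R)%:E)%E.
  under eq_integral do rewrite eG EFinM.
  have G0E : forall w, [set: T] w -> (0 <= (G w)%:E)%E by move=> w _; rewrite lee_fin.
  have mGE : measurable_fun setT (fun w => (G w)%:E) by exact/measurable_EFinP.
  have sq0 : 0 <= n%:R^-1 ^+ 2 :> R by exact: sqr_ge0.
  rewrite (ge0_integralZl_EFin _ measurableT G0E mGE sq0).
  apply: le_trans (lee_wpmul2l _ hb0) _; first by rewrite lee_fin sqr_ge0.
  rewrite -EFinM lee_fin le_eqVlt; apply/orP; left; apply/eqP.
  field; exact: lt0r_neq0.
have e1 : (\int[P]_w ((vnorm (g0b Phi thstar (fun i => s i t w) (theta w))) ^+ 2)%:E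
   = \int[P]_w (SS (g0b Phi thstar (fun i => s i t w) (theta w)))%:E)%E.
  by apply: eq_integral => w _; rewrite vnorm2.
have e2 : (\int[P]_w ((vnorm (theta w - thc)) ^+ 2)%:E
   = \int[P]_w (SS (theta w - thc))%:E)%E.
  by apply: eq_integral => w _; rewrite vnorm2.
rewrite e1 e2.
have mSg := @mmx_SS _ _ _ _ _ mg.
have mSD := @mmx_SS _ _ _ _ _ mD.
have mSb := @mmx_SS _ _ _ _ _ mbv.
apply: (@le_trans _ _ (\int[P]_w ((2 * SS (theta w - thc))%:E + (2 * SS (bv w))%:E))%E).
  apply: ge0_le_integral => //.
  - by move=> w _; rewrite lee_fin SS_ge0.
  - exact/measurable_EFinP.
  - under eq_fun do rewrite -EFinD.
    apply/measurable_EFinP; apply: measurable_funD; apply: measurable_funM => //;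
      exact: measurable_cst.
  - move=> w _; rewrite -EFinD lee_fin.
    exact: (@pw_bound R S n d Phi thstar (fun i => s i t w) (theta w) thc n0 hop).
have p1 : forall w, [set: T] w -> (0 <= (SS (theta w - thc))%:E)%E.
  by move=> w _; rewrite lee_fin SS_ge0.
have p2 : forall w, [set: T] w -> (0 <= (SS (bv w))%:E)%E.
  by move=> w _; rewrite lee_fin SS_ge0.
have m1 : measurable_fun setT (fun w => (SS (theta w - thc))%:E) by exact/measurable_EFinP.
have m2 : measurable_fun setT (fun w => (SS (bv w))%:E) by exact/measurable_EFinP.
have two0 : 0 <= 2 :> R by [].
have q1 : forall w, [set: T] w -> (0 <= (2 * SS (theta w - thc))%:E)%E.
  by move=> w _; rewrite lee_fin mulr_ge0 // SS_ge0.
have q2 : forall w, [set: T] w -> (0 <= (2 * SS (bv w))%:E)%E.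
  by move=> w _; rewrite lee_fin mulr_ge0 // SS_ge0.
have mq1 : measurable_fun setT (fun w => (2 * SS (theta w - thc))%:E).
  by apply/measurable_EFinP; apply: measurable_funM => //; exact: measurable_cst.
have mq2 : measurable_fun setT (fun w => (2 * SS (bv w))%:E).
  by apply/measurable_EFinP; apply: measurable_funM => //; exact: measurable_cst.
rewrite (ge0_integralD _ measurableT q1 mq1 q2 mq2).
have z1 : (\int[P]_w (2 * SS (theta w - thc))%:E = 2%:E * \int[P]_w (SS (theta w - thc))%:E)%E.
  under eq_integral do rewrite EFinM.
  exact: (ge0_integralZl_EFin _ measurableT p1 m1 two0).
have z2 : (\int[P]_w (2 * SS (bv w))%:E = 2%:E * \int[P]_w (SS (bv w))%:E)%E.
  under eq_integral do rewrite EFinM.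
  exact: (ge0_integralZl_EFin _ measurableT p2 m2 two0).
rewrite z1 z2; apply: leeD2l.
apply: le_trans (lee_wpmul2l _ hb) _; first by rewrite lee_fin.
rewrite -EFinM lee_fin mulrA; apply: ler_wpM2r; first by rewrite invr_ge0 ler0n.
lra.
Qed.
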